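(* Let $p$ be an odd prime, $q\in\mathbb{C}_p$ with $|q-1|_p<1$, $\alpha\in\mathbb{N}\cup\{0\}$, $h\in\mathbb{N}$. Let $s\in\mathbb{N}$ with $s\ge2$ and let $n_1,\dots,n_s,k$ be nonnegative integers with $\sum_{l=1}^s n_l>sk$. Then \[ \sum_{l=0}^{n_1+\cdots+n_s-sk}\binom{\sum_{d=1}^s(n_d-k)}{l}(-1)^l\frac{\widetilde{G}_{l+sk+1,q}^{(\alpha,h)}}{l+sk+1}=\begin{cases}[2]_q+q^{h+1}\dfrac{\widetilde{G}_{n_1+\cdots+n_s+1,q^{-1}}^{(\alpha,h)}}{n_1+\cdots+n_s+1} & \text{if } k=0,\\[2mm] \displaystyle\sum_{l=0}^{sk}\binom{sk}{l}(-1)^{sk+l}\Big\{[2]_q+q^{h+1}\frac{\widetilde{G}_{n_1+\cdots+n_s-l+1,q^{-1}}^{(\alpha,h)}}{n_1+\cdots+n_s-l+1}\Big\} & \text{if } k\neq 0.\end{cases} \]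
   Context: For $x\in\mathbb{Z}_p$ write $[x]_q=\frac{1-q^x}{1-q}$, and $[2]_q=1+q$. For a uniformly differentiable $f:\mathbb{Z}_p\to\mathbb{C}_p$, the fermionic $p$-adic $q$-integral is $\int_{\mathbb{Z}_p}f(\xi)\,d\mu_{-q}(\xi)=\lim_{N\to\infty}\frac{1}{[p^N]_{-q}}\sum_{\xi=0}^{p^N-1}f(\xi)(-q)^{\xi}$, with $[p^N]_{-q}=\frac{1+q^{p^N}}{1+q}$. The $(h,q)$-Genocchi polynomials with weight $\alpha$ are defined for $n\ge0$, $x\in\mathbb{Z}_p$ by $\frac{\widetilde{G}_{n+1,q}^{(\alpha,h)}(x)}{n+1}=\int_{\mathbb{Z}_p}q^{(h-1)\xi}[x+\xi]_{q^{\alpha}}^n\,d\mu_{-q}(\xi)$, and the numbers are $\widetilde{G}_{n,q}^{(\alpha,h)}=\widetilde{G}_{n,q}^{(\alpha,h)}(0)$. The numbers $\widetilde{G}_{n,q^{-1}}^{(\alpha,h)}$ are obtained by replacing $q$ by $q^{-1}$ everywhere: $\frac{\widetilde{G}_{n+1,q^{-1}}^{(\alpha,h)}}{n+1}=\int_{\mathbb{Z}_p}q^{(1-h)\xi}[\xi]_{q^{-\alpha}}^n\,d\mu_{-q^{-1}}(\xi)$. *)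

(* Defs.v *)
From HB Require Import structures.
From mathcomp Require Import all_boot all_order all_algebra.
From mathcomp Require Import reals.
From Stdlib Require Import ClassicalEpsilon.
Set Implicit Arguments. Unset Strict Implicit. Unset Printing Implicit Defensive.
Import Order.TTheory GRing.Theory Num.Theory.
Local Open Scope ring_scope.

Section PadicSetting.
Variables (R : realType) (K : fieldType) (absv : K -> R).

Definition abs_cvg (u : nat -> K) (l : K) : Prop :=
  forall e : R, 0 < e -> exists N : nat, forall m : nat, (N <= m)%N -> absv (u m - l) < e.

Definition abs_cauchy (u : nat -> K) : Prop :=
  forall e : R, 0 < e -> exists N : nat, forall m m' : nat,
    (N <= m)%N -> (N <= m')%N -> absv (u m - u m') < e.

(* absv is a non-archimedean absolute value normalised by |p| = 1/p,
   and K is complete for it.  Together with K : closedFieldType this is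
   our axiomatisation of C_p. *)
Definition is_Cp_abs (p : nat) : Prop :=
  (forall x, 0 <= absv x) /\
  (forall x, absv x = 0 <-> x = 0) /\
  (forall x y, absv (x * y) = absv x * absv y) /\
  (forall x y, absv (x + y) <= Num.max (absv x) (absv y)) /\
  absv (p%:R) = (p%:R)^-1 /\
  (forall u, abs_cauchy u -> exists l, abs_cvg u l).

Definition qnum (t : K) (x : nat) : K :=
  if t == 1 then x%:R else (1 - t ^+ x) / (1 - t).

(* fermionic p-adic q-integral:
   lim_N 1/[p^N]_{-q} * sum_{xi < p^N} f(xi) (-q)^xi,
   with [p^N]_{-q} = (1 + q^{p^N})/(1 + q). *)
Definition fermionic_int (p : nat) (q : K) (f : nat -> K) : K :=
  epsilon (inhabits 0) (fun l => abs_cvg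
    (fun N => ((1 + q ^+ (p ^ N)) / (1 + q))^-1 *
              \sum_(0 <= xi < p ^ N) f xi * (- q) ^+ xi) l).

(* (h,q)-Genocchi numbers with weight alpha:
   G_{m+1,q}/(m+1) = int q^{(h-1) xi} [xi]_{q^alpha}^m dmu_{-q}(xi).
   (G_0 is not defined by the paper; we set it to 0, it is never used.) *)
Definition qGenocchi (p alpha h : nat) (q : K) (n : nat) : K :=
  match n with
  | 0 => 0
  | m.+1 => (m.+1)%:R *
      fermionic_int p q (fun xi => q ^+ ((h - 1) * xi) * (qnum (q ^+ alpha) xi) ^+ m)
  end.

End PadicSetting.

(* Main.v *)
Require Import Defs.
From Stdlib Require Import ClassicalEpsilon.
From HB Require Import structures.
From mathcomp Require Import all_boot all_order all_algebra.
From mathcomp Require Import reals ring lra zify.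
Import Order.TTheory GRing.Theory Num.Theory.
Local Open Scope ring_scope.

Definition qs (K : fieldType) (u : K) (n : nat) : K := \sum_(i < n) u ^+ i.
Arguments qs {K}.

Section QS.
Variable K : fieldType.
Implicit Types u : K.

Lemma qnum_qs u n : qnum u n = qs u n.
Proof.
rewrite /qnum /qs; have [->|u1] := eqVneq u 1.
  by under eq_bigr do rewrite expr1n; rewrite sumr_const card_ord.
have h : 1 - u != 0 by rewrite subr_eq0 eq_sym.
apply: (mulIf h); rewrite divfK //.
by rewrite -opprB subrX1 mulrC -mulrN opprB.
Qed.

Lemma qsX1 u n : u ^+ n - 1 = (u - 1) * qs u n.
Proof. by rewrite subrX1. Qed.

Lemma qs0 u : qs u 0 = 0. Proof. by rewrite /qs big_ord0. Qed.
Lemma qs1 u : qs u 1 = 1. Proof. by rewrite /qs big_ord1 expr0. Qed.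

Lemma qsD u m n : qs u (m + n) = qs u m + u ^+ m * qs u n.
Proof.
rewrite /qs big_split_ord /= mulr_sumr; congr (_ + _).
by apply: eq_bigr => i _; rewrite exprD.
Qed.

Lemma qsM u a b : qs u (a * b) = qs u a * qs (u ^+ a) b.
Proof.
elim: b => [|b ih]; first by rewrite muln0 !qs0 mulr0.
rewrite mulnS qsD ih -addn1 addnC qsD qs1 mulrDr mulr1; congr (_ + _).
by rewrite mulrCA.
Qed.

Lemma qsS u n : qs u n.+1 = 1 + u * qs u n.
Proof. by rewrite -add1n qsD qs1 expr1. Qed.

Lemma qs_inv u n : u != 0 -> u ^+ n * qs u^-1 n = u * qs u n.
Proof.
move=> u0; elim: n => [|n ih]; first by rewrite !qs0 !mulr0.
rewrite qsS -addn1 qsD qs1 mulr1 addn1 mulrDr mulr1 exprS.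
rewrite mulrDr -ih; field; done.
Qed.
End QS.

Section Padic.
Variables (R : realType) (K : fieldType) (absv : K -> R).
Hypothesis abs_ge0 : forall x, 0 <= absv x.
Hypothesis abs_eq0 : forall x, absv x = 0 <-> x = 0.
Hypothesis absM : forall x y, absv (x * y) = absv x * absv y.
Hypothesis absD : forall x y, absv (x + y) <= Num.max (absv x) (absv y).

Lemma absDle x y B : absv x <= B -> absv y <= B -> absv (x + y) <= B.
Proof. move=> hx hy; apply: le_trans (absD x y) _; by rewrite ge_max hx hy. Qed.

Lemma abs1 : absv 1 = 1.
Proof.
have h1 : absv 1 != 0 by apply/eqP => /abs_eq0 /eqP; rewrite oner_eq0.
have := absM 1 1; rewrite mulr1 => e.
by apply: (mulfI h1); rewrite -e mulr1.
Qed.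

Lemma absN1 : absv (-1) = 1.
Proof.
have := absM (-1) (-1); rewrite mulrNN mulr1 abs1 => e.
have h0 := abs_ge0 (-1).
have : (absv (-1) - 1) * (absv (-1) + 1) = 0 by rewrite -subr_sqr expr1n expr2 -e subrr.
move/eqP; rewrite mulf_eq0 => /orP [/eqP|/eqP] hh.
  by apply/eqP; rewrite -subr_eq0 hh.
exfalso; move: hh; apply/eqP; rewrite gt_eqF // ltr_wpDl //.
Qed.

Lemma absN x : absv (- x) = absv x.
Proof. by rewrite -mulN1r absM absN1 mul1r. Qed.

Lemma absB x y : absv (x - y) = absv (y - x).
Proof. by rewrite -absN opprB. Qed.

Lemma absBle x y B : absv x <= B -> absv y <= B -> absv (x - y) <= B.
Proof. by move=> hx hy; apply: absDle; rewrite ?absN. Qed.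

Lemma abs_sum (I : Type) (r : seq I) (P : pred I) (F : I -> K) B :
  0 <= B -> (forall i, P i -> absv (F i) <= B) -> absv (\sum_(i <- r | P i) F i) <= B.
Proof.
move=> hB hF; apply: (big_ind (fun x => absv x <= B)) => //.
  by have := proj2 (abs_eq0 0) erefl => ->.
by move=> x y; apply: absDle.
Qed.

Lemma abs_nat n : absv (n%:R) <= 1.
Proof.
elim: n => [|n ih]; first by have := proj2 (abs_eq0 0) erefl => ->.
by rewrite -addn1 natrD; apply: absDle => //; rewrite abs1.
Qed.

Lemma abs_exp x n : absv (x ^+ n) = absv x ^+ n.
Proof. by elim: n => [|n ih]; rewrite ?expr0 ?abs1 // !exprS absM ih. Qed.

Lemma absV x : absv (x^-1) = (absv x)^-1.
Proof.
have [->|x0] := eqVneq x 0; first by rewrite invr0 (proj2 (abs_eq0 0) erefl) invr0.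
have ax : absv x != 0 by apply/eqP => /abs_eq0; apply/eqP.
by apply: (mulfI ax); rewrite -absM divff // abs1 divff.
Qed.

Lemma abs_strict x y : absv y < absv x -> absv (x + y) = absv x.
Proof.
move=> hlt; apply/eqP; rewrite eq_le; apply/andP; split.
  by apply: absDle => //; apply: ltW.
have := absD (x + y) (- y); rewrite addrK absN => h.
move: h; rewrite le_max => /orP [] // h; exfalso.
by move: (lt_le_trans hlt h); rewrite ltxx.
Qed.

Lemma abs_mul_le x y a b : absv x <= a -> absv y <= b -> 0 <= a -> absv (x * y) <= a * b.
Proof. by move=> hx hy ha; rewrite absM; apply: ler_pM. Qed.

Lemma abs_mul_le1 x y B : absv x <= 1 -> absv y <= B -> absv (x * y) <= B.
Proof. move=> hx hy; rewrite absM -[B]mul1r; apply: ler_pM => //. Qed.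

Lemma abs_subXX a b n : absv a <= 1 -> absv b <= 1 -> absv (a ^+ n - b ^+ n) <= absv (a - b).
Proof.
move=> ha hb; case: n => [|n]; first by rewrite subrr (proj2 (abs_eq0 0) erefl).
rewrite subrXX absM -[X in _ <= X]mulr1; apply: ler_wpM2l => //.
apply: abs_sum => // i _; rewrite absM !abs_exp.
by rewrite -[1]mulr1; apply: ler_pM; rewrite ?exprn_ge0 ?exprn_ile1.
Qed.

Variable p : nat.
Hypothesis Hp : prime p.
Hypothesis Hodd : odd p.
Hypothesis absp : absv (p%:R) = (p%:R)^-1.

Let abs0 : absv 0 = 0. Proof. exact: (proj2 (abs_eq0 0) erefl). Qed.

Lemma absp_lt1 : absv (p%:R) < 1.
Proof.
rewrite absp invf_lt1 ?ltr0n ?prime_gt0 //; rewrite ltr1n; exact: prime_gt1.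
Qed.

Lemma abs2 : absv (2%:R : K) = 1.
Proof.
apply/eqP; rewrite eq_le abs_nat //=.
rewrite leNgt; apply/negP => h2.
have ep : (p%:R : K) = 1 + (p./2)%:R * 2%:R.
  by rewrite -{1}(odd_double_half p) Hodd natrD -muln2 natrM.
have e1 : (1 : K) = p%:R - (p./2)%:R * 2%:R by rewrite ep addrK.
have : absv (1 : K) < 1.
  rewrite e1; apply: le_lt_trans (absD _ _) _; rewrite gt_max absp_lt1 /= absN absM.
  apply: le_lt_trans h2; rewrite -[X in _ <= X]mul1r; apply: ler_wpM2r => //.
  exact: abs_nat.
by rewrite abs1 ltxx.
Qed.

Lemma charK n : (0 < n)%N -> (n%:R : K) != 0.
Proof.
move=> n0; apply/eqP => hn.
have [m cpm em] := pfactor_coprime Hp n0.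
have p0 : (p%:R : K) != 0.
  apply/eqP => /(f_equal absv); rewrite absp abs0 => /eqP; rewrite invr_eq0 pnatr_eq0.
  by apply/negP; rewrite -lt0n prime_gt0.
have hm : (m%:R : K) = 0.
  move: hn; rewrite em natrM natrX => /eqP; rewrite mulf_eq0 expf_eq0 (negbTE p0) andbF orbF.
  by move/eqP.
have m0 : (0 < m)%N by rewrite lt0n; apply/eqP => m0; move: n0; rewrite em m0.
have [a _ ha] := Bezoutl p m0.
move: ha; rewrite /coprime in cpm; rewrite gcdnC (eqP cpm) => /dvdnP [c hc].
have e : (1 : K) + a%:R * p%:R = 0.
  have : (((1 + a * p)%N)%:R : K) = 0 by rewrite hc natrM hm mulr0.
  by rewrite natrD natrM.
have : absv (1 : K) < 1.
  have -> : (1 : K) = - (a%:R * p%:R) by apply/eqP; rewrite -addr_eq0 e.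
  rewrite absN absM; apply: le_lt_trans absp_lt1.
  by rewrite -[X in _ <= X]mul1r; apply: ler_wpM2r => //; apply: abs_nat.
by rewrite abs1 ltxx.
Qed.

Lemma abs_unit1 w : absv (w - 1) < 1 -> absv w = 1.
Proof.
move=> h; have := @abs_strict 1 (w - 1); rewrite abs1 addrA (addrC 1 w) addrK; exact.
Qed.

Lemma abs_1p w : absv (w - 1) < 1 -> absv (1 + w) = 1.
Proof.
move=> h; have e : 1 + w = 2%:R + (w - 1) by ring.
by rewrite e abs_strict abs2 //.
Qed.


Variable d : R.
Hypothesis hpd : absv (p%:R) <= d.
Hypothesis hd1 : d < 1.

Lemma d_ge0 : 0 <= d. Proof. exact: le_trans (abs_ge0 _) hpd. Qed.

Definition adm (u : K) := absv (u - 1) <= d.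

Lemma adm_abs {u} : adm u -> absv u = 1.
Proof. by move=> h; apply: abs_unit1; apply: le_lt_trans h hd1. Qed.

Lemma adm_1p {u} : adm u -> absv (1 + u) = 1.
Proof. by move=> h; apply: abs_1p; apply: le_lt_trans h hd1. Qed.

Lemma adm_neq0 {u} : adm u -> u != 0.
Proof. by move=> /adm_abs h; apply/eqP => u0; move: h; rewrite u0 abs0 => /eqP; rewrite eq_sym oner_eq0. Qed.

Lemma abs_qs_le1 u n : absv u <= 1 -> absv (qs u n) <= 1.
Proof.
move=> hu; apply: abs_sum => // i _; rewrite abs_exp; exact: exprn_ile1.
Qed.

Lemma adm_X u n : adm u -> adm (u ^+ n).
Proof.
move=> h; rewrite /adm qsX1 absM -[X in _ <= X]mulr1; apply: ler_pM => //.
by apply: abs_qs_le1; rewrite adm_abs.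
Qed.

Lemma adm_V {u} : adm u -> adm u^-1.
Proof.
move=> h; have u0 := adm_neq0 h; rewrite /adm.
have -> : u^-1 - 1 = - u^-1 * (u - 1) by field.
by rewrite absM absN absV adm_abs // invr1 mul1r.
Qed.

Lemma abs_qsp u : adm u -> absv (qs u p) <= d.
Proof.
move=> h; have hu := adm_abs h.
have -> : qs u p = \sum_(i < p) (u ^+ i - 1) + p%:R.
  by rewrite sumrB sumr_const card_ord subrK.
apply: absDle => //; apply: abs_sum; first exact: d_ge0.
move=> i _; rewrite qsX1 absM -[d]mulr1; apply: ler_pM => //.
by apply: abs_qs_le1; rewrite hu.
Qed.

Lemma abs_qspN N u : adm u -> absv (qs u (p ^ N)) <= d ^+ N.
Proof.
elim: N u => [|N ih] u h; first by rewrite expn0 qs1 abs1.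
rewrite expnS qsM absM exprS; apply: ler_pM => //; first exact: abs_qsp.
apply: ih; rewrite /adm qsX1 absM -[d]mulr1; apply: ler_pM => //.
by apply: abs_qs_le1; rewrite adm_abs.
Qed.

Lemma abs_qsM N y u : adm u -> absv (qs u (y * p ^ N)) <= d ^+ N.
Proof.
move=> h; rewrite mulnC qsM absM -[d ^+ N]mulr1; apply: ler_pM => //; first exact: abs_qspN.
by apply: abs_qs_le1; rewrite abs_exp adm_abs // expr1n.
Qed.

Lemma abs_XM N y u : adm u -> absv (u ^+ (y * p ^ N) - 1) <= d ^+ N.
Proof.
move=> h; rewrite qsX1 absM -[d ^+ N]mul1r; apply: ler_pM => //; last exact: abs_qsM.
exact: le_trans h (ltW hd1).
Qed.


Lemma bernoulli (c : R) N : 0 <= c -> 1 + N%:R * c <= (1 + c) ^+ N.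
Proof.
move=> c0; elim: N => [|N ih]; first by rewrite mul0r addr0 expr0.
rewrite exprS -natr1 mulrDl mul1r.
have h1 : 0 <= (1 + c) ^+ N by apply: exprn_ge0; lra.
have h2 : 0 <= N%:R * c by apply: mulr_ge0.
nra.
Qed.

Lemma dpow_small {e} : 0 < e -> exists N, d ^+ N < e.
Proof.
move=> e0; have [d0|dpos] := eqVneq d 0.
  by exists 1%N; rewrite d0 expr1.
have dp : 0 < d by rewrite lt_def dpos d_ge0.
set c := d^-1 - 1.
have c0 : 0 < c by rewrite /c subr_gt0 invf_gt1.
set B := e^-1 / c.
have B0 : 0 <= B by rewrite /B divr_ge0 // ?invr_ge0 ltW.
exists (Num.Def.archi_bound B); set N := Num.Def.archi_bound B.
have hN : B < N%:R := archi_boundP B0.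
have hb := @bernoulli c N (ltW c0).
have e1 : d ^+ N = ((1 + c) ^+ N)^-1 by rewrite /c addrC subrK exprVn invrK.
rewrite e1 -[e]invrK; rewrite ltf_pV2 ?posrE ?invr_gt0 //; last by apply: exprn_gt0; lra.
apply: lt_le_trans hb.
have : e^-1 < N%:R * c by rewrite -ltr_pdivrMr // .
lra.
Qed.

Lemma cvg_uniq {u l1 l2} : abs_cvg absv u l1 -> abs_cvg absv u l2 -> l1 = l2.
Proof.
move=> h1 h2; apply/eqP; rewrite -subr_eq0; apply/eqP; apply/abs_eq0.
apply/eqP; rewrite eq_le abs_ge0 andbT leNgt; apply/negP => hlt.
have [N1 H1] := h1 _ hlt; have [N2 H2] := h2 _ hlt.
have e : l1 - l2 = (u (maxn N1 N2) - l2) - (u (maxn N1 N2) - l1) by ring.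
have : absv (l1 - l2) < absv (l1 - l2).
  rewrite {1}e; apply: le_lt_trans (absD _ _) _; rewrite gt_max absN.
  by rewrite H1 ?H2 ?leq_maxl ?leq_maxr.
by rewrite ltxx.
Qed.

Lemma cvg_ext {u v l} : abs_cvg absv u l -> (forall N, u N = v N) -> abs_cvg absv v l.
Proof. by move=> h e x x0; have [N HN] := h x x0; exists N => m hm; rewrite -e HN. Qed.

Lemma cvg_const c : abs_cvg absv (fun _ => c) c.
Proof. by move=> x x0; exists 0%N => m _; rewrite subrr abs0. Qed.

Lemma cvg_add {u v a b} : abs_cvg absv u a -> abs_cvg absv v b ->
  abs_cvg absv (fun N => u N + v N) (a + b).
Proof.
move=> hu hv x x0; have [N1 H1] := hu x x0; have [N2 H2] := hv x x0.
exists (maxn N1 N2) => m hm.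
have -> : u m + v m - (a + b) = (u m - a) + (v m - b) by ring.
apply: le_lt_trans (absD _ _) _; rewrite gt_max H1 ?H2 //.
  exact: leq_trans (leq_maxr _ _) hm.
exact: leq_trans (leq_maxl _ _) hm.
Qed.

Lemma cvg_scale {c u a} : absv c <= 1 -> abs_cvg absv u a ->
  abs_cvg absv (fun N => c * u N) (c * a).
Proof.
move=> hc hu x x0; have [N H] := hu x x0; exists N => m hm.
rewrite -mulrBr absM; apply: le_lt_trans (H m hm).
by rewrite -[X in _ <= X]mul1r; apply: ler_wpM2r.
Qed.

Lemma cvg_sum (I : Type) (r : seq I) (P : pred I) (F : I -> nat -> K) (L : I -> K) :
  (forall i, P i -> abs_cvg absv (F i) (L i)) ->
  abs_cvg absv (fun N => \sum_(i <- r | P i) F i N) (\sum_(i <- r | P i) L i).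
Proof.
move=> h; elim: r => [|i r ih].
  by rewrite big_nil; apply: (cvg_ext (cvg_const 0)) => N; rewrite big_nil.
rewrite big_cons; case: ifP => Pi.
  by apply: (cvg_ext (cvg_add (h i Pi) ih)) => N; rewrite big_cons Pi.
by apply: (cvg_ext ih) => N; rewrite big_cons Pi.
Qed.

Lemma cvg_near {u v l} : (forall N, absv (u N - v N) <= d ^+ N) ->
  abs_cvg absv u l -> abs_cvg absv v l.
Proof.
move=> huv hu x x0; have [N1 H1] := hu x x0; have [N2 H2] := dpow_small x0.
exists (maxn N1 N2) => m hm.
have -> : v m - l = (u m - l) - (u m - v m) by ring.
apply: le_lt_trans (absD _ _) _; rewrite gt_max absN H1 /=; last exact: leq_trans (leq_maxl _ _) hm.
apply: le_lt_trans (huv m) _; apply: le_lt_trans H2.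
apply: ler_wiXn2l; [exact: d_ge0|exact: ltW|exact: leq_trans (leq_maxr _ _) hm].
Qed.

Hypothesis complete : forall u, abs_cauchy absv u -> exists l, abs_cvg absv u l.

Lemma cauchy_step u : (forall N, absv (u N.+1 - u N) <= d ^+ N) -> exists l, abs_cvg absv u l.
Proof.
move=> hs; apply: complete.
have gen : forall N j, absv (u (N + j)%N - u N) <= d ^+ N.
  move=> N; elim => [|j ih]; first by rewrite addn0 subrr abs0 exprn_ge0 // d_ge0.
  have -> : u (N + j.+1)%N - u N = (u (N + j).+1 - u (N + j)%N) + (u (N + j)%N - u N).
    by rewrite addnS; ring.
  apply: absDle => //; apply: le_trans (hs _) _.
  by apply: ler_wiXn2l; [exact: d_ge0|exact: ltW|exact: leq_addr].
move=> x x0; have [N HN] := dpow_small x0; exists N => m m' hm hm'.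
have -> : u m - u m' = (u m - u N) - (u m' - u N) by ring.
apply: le_lt_trans (absD _ _) _; rewrite gt_max absN.
by rewrite -(subnKC hm) -(subnKC hm') !(le_lt_trans (gen _ _)).
Qed.


Lemma expN_odd (x : K) n : odd n -> (- x) ^+ n = - x ^+ n.
Proof. by move=> hn; rewrite exprNn -signr_odd hn expr1 mulN1r. Qed.

Lemma expN_even (x : K) n : ~~ odd n -> (- x) ^+ n = x ^+ n.
Proof. by move=> hn; rewrite exprNn -signr_odd (negbTE hn) expr0 mul1r. Qed.

Lemma oddpN N : odd (p ^ N).
Proof. by rewrite oddX Hodd orbT. Qed.

Definition Tsum (u : K) (f : nat -> K) (M : nat) := \sum_(0 <= xi < M) f xi * (- u) ^+ xi.
Definition An (u : K) (f : nat -> K) (N : nat) :=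
  ((1 + u ^+ (p ^ N)) / (1 + u))^-1 * Tsum u f (p ^ N).

Definition Good (f : nat -> K) :=
  (forall x, absv (f x) <= 1) /\ (forall N x y, absv (f (x + y * p ^ N)%N - f x) <= d ^+ N).

Lemma sum_split M b (F : nat -> K) :
  \sum_(0 <= i < M * b) F i = \sum_(0 <= j < b) \sum_(0 <= i < M) F (i + j * M)%N.
Proof.
elim: b => [|b ih]; first by rewrite muln0 !big_geq.
rewrite big_nat_recr //= -ih mulnS addnC (@big_cat_nat _ _ _ (M * b)%N) ?leq_addr //=.
congr (_ + _); rewrite -{1}[(M * b)%N]add0n big_addn addKn.
by apply: eq_big_nat => i _; rewrite mulnC.
Qed.

Lemma absDn u N : adm u -> absv (((1 + u ^+ (p ^ N)) / (1 + u))^-1) = 1.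
Proof.
move=> h; rewrite absV absM absV !adm_1p ?invr1 ?mulr1 ?invr1 //; exact: adm_X.
Qed.

Lemma An_bound u f N B : adm u -> (forall x, absv (f x) <= B) -> absv (An u f N) <= B.
Proof.
move=> h hf; have B0 : 0 <= B := le_trans (abs_ge0 _) (hf 0%N).
rewrite /An absM absDn // mul1r; apply: abs_sum => // i _.
by rewrite absM abs_exp absN (adm_abs h) expr1n mulr1.
Qed.

Lemma An_step u f N : adm u -> Good f -> absv (An u f N.+1 - An u f N) <= d ^+ N.
Proof.
move=> hu [f1 fc].
set M := (p ^ N)%N; set v := u ^+ M.
have hv : adm v := adm_X u M hu.
set S := \sum_(0 <= j < p) (- v) ^+ j.
have eS : 1 + v ^+ p = (1 + v) * S.
  have eS' : S = \sum_(i < p) (- v) ^+ i by rewrite /S big_mkord.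
  have := subrX1 (- v) p; rewrite -eS' expN_odd // => e.
  have -> : (1 + v) * S = - ((- v - 1) * S) by ring.
  by rewrite -e; ring.
have hS : absv S = 1.
  have h1 := adm_1p hv; have h2 := adm_1p (adm_X v p hv).
  by move: (f_equal absv eS); rewrite absM h1 h2 mul1r.
have S0 : S != 0 by apply/eqP => S0; move: hS; rewrite S0 abs0 => /eqP; rewrite eq_sym oner_eq0.
have u0 : 1 + u != 0 by apply/eqP => e; move: (adm_1p hu); rewrite e abs0 => /eqP; rewrite eq_sym oner_eq0.
have v0 : 1 + v != 0 by apply/eqP => e; move: (adm_1p hv); rewrite e abs0 => /eqP; rewrite eq_sym oner_eq0.
have eT : Tsum u f (p ^ N.+1) - Tsum u f M * S =
   \sum_(0 <= j < p) \sum_(0 <= i < M) (f (i + j * M)%N - f i) * (- u) ^+ i * (- v) ^+ j.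
  rewrite /Tsum expnSr sum_split big_distrr /= -sumrB; apply: eq_big_nat => j _.
  rewrite big_distrl /= -sumrB; apply: eq_big_nat => i _.
  rewrite exprD (mulnC j M) exprM (@expN_odd u _ (oddpN N)) -/v.
  by move: (f (i + M * j)%N) (f i) ((- u) ^+ i) ((- v) ^+ j) => a b c e; ring.
have eA : An u f N.+1 - An u f N = (1 + u) / ((1 + v) * S) *
    (Tsum u f (p ^ N.+1) - Tsum u f M * S).
  rewrite /An expnSr exprM -/M -/v eS; field.
  by rewrite S0 v0 u0.
rewrite eA absM -[d ^+ N]mul1r; apply: ler_pM => //.
  rewrite absM absV absM hS (adm_1p hu) (adm_1p hv) !mulr1 invr1. by rewrite mulr1.
rewrite eT; apply: abs_sum; first by rewrite exprn_ge0 // d_ge0.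
move=> j _; apply: abs_sum; first by rewrite exprn_ge0 // d_ge0.
move=> i _; rewrite !absM !abs_exp !absN (adm_abs hu) (adm_abs hv) !expr1n !mulr1; exact: fc.
Qed.

Lemma An_cvg u f : adm u -> Good f -> exists l, abs_cvg absv (An u f) l.
Proof. by move=> hu hf; apply: cauchy_step => N; apply: An_step. Qed.


Lemma d_pow_ge0 N : 0 <= d ^+ N. Proof. by rewrite exprn_ge0 // d_ge0. Qed.

Lemma Good_const c : absv c <= 1 -> Good (fun _ => c).
Proof. by move=> h; split => // N x y; rewrite subrr abs0 d_pow_ge0. Qed.

Lemma Good_mul {f g} : Good f -> Good g -> Good (fun x => f x * g x).
Proof.
move=> [f1 fc] [g1 gc]; split => [x|N x y].
  by rewrite absM -[1]mulr1; apply: ler_pM.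
have -> : f (x + y * p ^ N)%N * g (x + y * p ^ N)%N - f x * g x =
  f (x + y * p ^ N)%N * (g (x + y * p ^ N)%N - g x) + (f (x + y * p ^ N)%N - f x) * g x by ring.
apply: absDle; rewrite absM.
  by rewrite -[d ^+ N]mul1r; apply: ler_pM.
by rewrite -[d ^+ N]mulr1; apply: ler_pM.
Qed.

Lemma Good_ext {f} g : Good f -> (forall x, f x = g x) -> Good g.
Proof. by move=> [f1 fc] e; split => [x|N x y]; rewrite -!e. Qed.

Lemma Good_exp {f} n : Good f -> Good (fun x => f x ^+ n).
Proof.
move=> hf; elim: n => [|n ih].
  by apply: (Good_ext _ (Good_const 1 _)) => [|x]; rewrite ?abs1 ?expr0.
by apply: (Good_ext _ (Good_mul hf ih)) => x; rewrite exprS.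
Qed.

Lemma Good_1sub {f} : Good f -> Good (fun x => 1 - f x).
Proof.
move=> [f1 fc]; split => [x|N x y]; first by apply: absBle; rewrite ?abs1.
have -> : 1 - f (x + y * p ^ N)%N - (1 - f x) = - (f (x + y * p ^ N)%N - f x) by ring.
by rewrite absN.
Qed.

Lemma Good_pow u : adm u -> Good (fun x => u ^+ x).
Proof.
move=> hu; split => [x|N x y]; first by rewrite abs_exp (adm_abs hu) expr1n.
have -> : u ^+ (x + y * p ^ N) - u ^+ x = u ^+ x * (u ^+ (y * p ^ N) - 1) by rewrite exprD; ring.
by rewrite absM abs_exp (adm_abs hu) expr1n mul1r; apply: abs_XM.
Qed.

Lemma Good_qs u : adm u -> Good (qs u).
Proof.
move=> hu; split => [x|N x y]; first by apply: abs_qs_le1; rewrite (adm_abs hu).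
rewrite qsD addrAC subrr add0r absM abs_exp (adm_abs hu) expr1n mul1r; exact: abs_qsM.
Qed.

Lemma fint_eq u f l : abs_cvg absv (An u f) l -> fermionic_int absv p u f = l.
Proof.
move=> h; rewrite /fermionic_int.
have := epsilon_spec (inhabits 0) (fun l => abs_cvg absv (An u f) l) (ex_intro _ l h).
by move=> h'; apply: (cvg_uniq h' h).
Qed.


Lemma Tsum_shift u g M : odd M -> u * Tsum u (fun x => g x.+1) M + Tsum u g M = g 0%N + g M * u ^+ M.
Proof.
move=> hM.
have e1 : \sum_(0 <= x < M.+1) g x * (- u) ^+ x = Tsum u g M + g M * (- u) ^+ M.
  by rewrite big_nat_recr.
have e2 : \sum_(0 <= x < M.+1) g x * (- u) ^+ x = g 0%N + \sum_(0 <= x < M) g x.+1 * (- u) ^+ x.+1.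
  by rewrite big_nat_recl // expr0 mulr1.
have e3 : u * Tsum u (fun x => g x.+1) M = - \sum_(0 <= x < M) g x.+1 * (- u) ^+ x.+1.
  rewrite /Tsum mulr_sumr -sumrN; apply: eq_big_nat => i _; rewrite exprS; ring.
rewrite e3; have : Tsum u g M + g M * (- u) ^+ M - g 0%N = \sum_(0 <= x < M) g x.+1 * (- u) ^+ x.+1.
  by rewrite -e1 e2 addrC addKr.
move=> <-; rewrite expN_odd //; ring.
Qed.

Lemma An_shift u g N : adm u ->
  u * An u (fun x => g x.+1) N + An u g N = ((1 + u ^+ (p ^ N)) / (1 + u))^-1 * (g 0%N + g (p ^ N)%N * u ^+ (p ^ N)).
Proof.
move=> hu; rewrite /An -Tsum_shift ?oddpN //; ring.
Qed.

Lemma Tsum_refl u g m : u != 0 -> ~~ odd m ->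
  Tsum u g m.+1 = u ^+ m * Tsum u^-1 (fun x => g (m - x)%N) m.+1.
Proof.
move=> u0 hm; rewrite /Tsum big_nat_rev /= mulr_sumr; apply: eq_big_nat => i /andP [_ hi].
rewrite add0n subSS exprB // ?unitfE ?oppr_eq0 // (@expN_even u m hm) -exprVn invrN; ring.
Qed.

Lemma adm_1p_neq0 {u} : adm u -> 1 + u != 0.
Proof. by move=> h; apply/eqP => e; move: (adm_1p h); rewrite e abs0 => /eqP; rewrite eq_sym oner_eq0. Qed.

Lemma An_refl u g N : adm u -> An u g N = An u^-1 (fun x => g ((p ^ N).-1 - x)%N) N.
Proof.
move=> hu; have u0 := adm_neq0 hu.
have hM : (p ^ N)%N = ((p ^ N).-1).+1 by rewrite prednK // expn_gt0 prime_gt0.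
set m := (p ^ N).-1 in hM *.
have hm : ~~ odd m by have := oddpN N; rewrite hM /=.
rewrite /An hM Tsum_refl // mulrA; congr (_ * _).
have h1 := adm_1p_neq0 hu.
have h2 := adm_1p_neq0 (adm_X u m.+1 hu).
have h3 := adm_1p_neq0 (adm_V hu).
have h4 := adm_1p_neq0 (adm_X _ m.+1 (adm_V hu)).
move: h2 h4; rewrite exprVn !exprS => h2 h4.
have h1' : u + 1 != 0 by rewrite addrC.
have h2' : u * u ^+ m + 1 != 0 by rewrite addrC.
field; by rewrite u0 h1' expf_neq0 // h2'.
Qed.

Lemma pN_gt0 N : (0 < p ^ N)%N. Proof. by rewrite expn_gt0 prime_gt0. Qed.

Lemma An_close u f g N B : adm u -> (forall x, (x < p ^ N)%N -> absv (f x - g x) <= B) ->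
  absv (An u f N - An u g N) <= B.
Proof.
move=> hu h; have B0 : 0 <= B := le_trans (abs_ge0 _) (h 0%N (pN_gt0 N)).
rewrite /An -mulrBr absM absDn // mul1r /Tsum -sumrB big_nat.
apply: abs_sum => // i /andP [_ hi]; rewrite -mulrBl absM abs_exp absN (adm_abs hu) expr1n mulr1.
exact: h.
Qed.

Lemma prod3_close (a1 a2 a3 b1 b2 b3 : K) B :
  absv a1 <= 1 -> absv a2 <= 1 -> absv a3 <= 1 -> absv b1 <= 1 -> absv b2 <= 1 -> absv b3 <= 1 ->
  absv (a1 - b1) <= B -> absv (a2 - b2) <= B -> absv (a3 - b3) <= B ->
  absv (a1 * a2 * a3 - b1 * b2 * b3) <= B.
Proof.
move=> ha1 ha2 ha3 hb1 hb2 hb3 h1 h2 h3.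
have -> : a1 * a2 * a3 - b1 * b2 * b3 = (a1 - b1) * a2 * a3 + b1 * (a2 - b2) * a3 + b1 * b2 * (a3 - b3) by ring.
apply: absDle; first apply: absDle; rewrite !absM.
- rewrite -mulrA -[B]mulr1; apply: ler_pM => //; first exact: mulr_ge0.
  exact: mulr_ile1.
- rewrite (mulrAC _ _ (absv a3)) -[B]mul1r; apply: ler_pM => //; first exact: mulr_ge0.
  exact: mulr_ile1.
- rewrite -[B]mul1r; apply: ler_pM => //; first exact: mulr_ge0.
  exact: mulr_ile1.
Qed.

Lemma An_scale u c f N : An u (fun x => c * f x) N = c * An u f N.
Proof.
rewrite /An /Tsum mulrCA; congr (_ * _); rewrite mulr_sumr; apply: eq_bigr => i _; ring.
Qed.

Section Core.
Variables (q w t : K) (a m : nat).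
Hypotheses (hq : adm q) (hw : adm w) (ht : adm t) (hm1 : (0 < m)%N).

Definition FF (x : nat) := w ^+ x * qs t x ^+ a * (1 - qs t x) ^+ m.
Definition HH (x : nat) := w^-1 ^+ x * qs t^-1 x ^+ m * (1 - qs t^-1 x) ^+ a.

Lemma Good_FF : Good FF.
Proof.
apply: (Good_ext _ (Good_mul (Good_mul (Good_pow _ hw) (Good_exp a (Good_qs _ ht)))
   (Good_exp m (Good_1sub (Good_qs _ ht))))) => x //.
Qed.

Lemma Good_HH : Good HH.
Proof.
apply: (Good_ext _ (Good_mul (Good_mul (Good_pow _ (adm_V hw)) (Good_exp m (Good_qs _ (adm_V ht))))
   (Good_exp a (Good_1sub (Good_qs _ (adm_V ht)))))) => x //.
Qed.

Lemma HH0 : HH 0%N = 0.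
Proof. by rewrite /HH qs0 expr0n /= eqn0Ngt hm1 mulr0 mul0r. Qed.


Lemma pt_close N x : (x < p ^ N)%N -> absv (FF ((p ^ N).-1 - x).+1 - w * HH x.+1) <= d ^+ N.
Proof.
move=> hx.
have hx' : (x <= (p ^ N).-1)%N by rewrite -ltnS prednK ?pN_gt0.
have ey : ((p ^ N).-1 - x).+1 = (p ^ N - x)%N by rewrite -subSn // prednK ?pN_gt0.
rewrite ey; set y := (p ^ N - x)%N.
have eM : (p ^ N)%N = (y + x)%N by rewrite subnK // ltnW.
have w0 := adm_neq0 hw; have t0 := adm_neq0 ht.
set Q := qs t^-1 x.
have hQ : absv Q <= 1 by apply: abs_qs_le1; rewrite (adm_abs (adm_V ht)).
have hTQ : absv (t^-1 * Q) <= 1 by rewrite absM (adm_abs (adm_V ht)) mul1r.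
have eH : w * HH x.+1 = w^-1 ^+ x * (- (t^-1 * Q)) ^+ a * (1 + t^-1 * Q) ^+ m.
  rewrite /HH qsS -/Q exprS.
  have -> : 1 - (1 + t^-1 * Q) = - (t^-1 * Q) by ring.
  field; done.
rewrite eH /FF.
have e2 : qs t y - (- (t^-1 * Q)) = qs t (p ^ N) - (t ^+ (p ^ N) - 1) * (t^-1 * Q).
  have ei := @qs_inv _ t x t0; rewrite -/Q in ei.
  have ex : qs t x = t^-1 * (t ^+ x * Q) by rewrite ei mulrA mulVf // mul1r.
  rewrite eM qsD exprD ex; field; done.
have b2 : absv (qs t y - (- (t^-1 * Q))) <= d ^+ N.
  rewrite e2; apply: absBle; first exact: abs_qspN.
  rewrite absM -[d ^+ N]mulr1; apply: ler_pM => //.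
  by have := abs_XM N 1 _ ht; rewrite mul1n.
have e1 : w ^+ y - w^-1 ^+ x = w^-1 ^+ x * (w ^+ (p ^ N) - 1).
  rewrite eM exprD exprVn; field; by rewrite expf_neq0.
have hqy : absv (qs t y) <= 1 by apply: abs_qs_le1; rewrite (adm_abs ht).
have h1q : absv (1 - qs t y) <= 1 by apply: absBle; rewrite ?abs1.
have h1Q : absv (1 + t^-1 * Q) <= 1 by apply: absDle; rewrite ?abs1.
have hNQ : absv (- (t^-1 * Q)) <= 1 by rewrite absN.
apply: prod3_close.
- by rewrite abs_exp (adm_abs hw) expr1n.
- by rewrite abs_exp exprn_ile1.
- by rewrite abs_exp exprn_ile1.
- by rewrite abs_exp (adm_abs (adm_V hw)) expr1n.
- by rewrite abs_exp exprn_ile1.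
- by rewrite abs_exp exprn_ile1.
- rewrite e1 absM abs_exp (adm_abs (adm_V hw)) expr1n mul1r.
  by have := abs_XM N 1 _ hw; rewrite mul1n.
- exact: le_trans (abs_subXX _ _ _ hqy hNQ) b2.
- apply: le_trans (abs_subXX _ _ _ h1q h1Q) _.
  have -> : 1 - qs t y - (1 + t^-1 * Q) = - (qs t y - (- (t^-1 * Q))) by ring.
  by rewrite absN.
Qed.


Lemma core N : absv (An q FF N - ((1 + q) * FF 0%N + q ^+ 2 * w * An q^-1 HH N)) <= d ^+ N.
Proof.
set M := (p ^ N)%N.
set D := ((1 + q ^+ M) / (1 + q))^-1.
set D' := ((1 + q^-1 ^+ M) / (1 + q^-1))^-1.
set G := An q^-1 (fun x => FF ((p ^ N).-1 - x).+1) N.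
set Z := An q^-1 (fun x => HH x.+1) N.
set Y := An q^-1 HH N.
have hq' := adm_V hq.
have hcl : absv (G - w * Z) <= d ^+ N.
  rewrite /Z -An_scale; apply: An_close => // x hx; exact: pt_close.
have eX : An q FF N = D * (FF 0%N + FF M * q ^+ M) - q * G.
  have := An_shift q FF N hq; rewrite -/M -/D (An_refl q _ N hq) -/G => <-; ring.
have eZ : Z = q * (D' * (HH M * q^-1 ^+ M) - Y).
  have := An_shift q^-1 HH N hq'; rewrite -/M -/D' -/Z -/Y HH0 add0r => <-.
  have q0 := adm_neq0 hq; field; done.
have -> : An q FF N - ((1 + q) * FF 0%N + q ^+ 2 * w * Y) =
   (D * (FF 0%N + FF M * q ^+ M) - (1 + q) * FF 0%N) - q * (G - w * Z)
   - q ^+ 2 * w * (D' * (HH M * q^-1 ^+ M)).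
  by rewrite eX eZ; ring.
have [F1 Fc] := Good_FF; have [H1 Hc] := Good_HH.
apply: absBle; first apply: absBle.
- have h1 := adm_1p_neq0 hq; have h2 := adm_1p_neq0 (adm_X q M hq).
  have -> : D * (FF 0%N + FF M * q ^+ M) - (1 + q) * FF 0%N =
     (1 + q) / (1 + q ^+ M) * q ^+ M * (FF (0 + 1 * p ^ N)%N - FF 0%N).
    by rewrite add0n mul1n /D; field; rewrite h1 h2.
  rewrite absM absM absM absV (adm_1p hq) (adm_1p (adm_X q M hq)) abs_exp (adm_abs hq).
  by rewrite invr1 expr1n !mul1r; apply: Fc.
- by rewrite absM (adm_abs hq) mul1r.
- have hb := Hc N 0%N 1%N; rewrite add0n mul1n HH0 subr0 -/M in hb.
  move: (HH M) hb => z hb.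
  have -> : absv (q ^+ 2 * w * (D' * (z * q^-1 ^+ M))) = absv z.
    rewrite !absM !abs_exp (adm_abs hq) (adm_abs hw) (adm_abs hq') /D' absDn // !expr1n; ring.
  exact: hb.
Qed.

End Core.

Lemma An_ext u f g N : (forall x, f x = g x) -> An u f N = An u g N.
Proof. by move=> e; rewrite /An /Tsum; congr (_ * _); apply: eq_bigr => i _; rewrite e. Qed.

Lemma An_add u f g N : An u (fun x => f x + g x) N = An u f N + An u g N.
Proof.
rewrite /An /Tsum -mulrDr; congr (_ * _); rewrite -big_split /=.
by apply: eq_bigr => i _; rewrite mulrDl.
Qed.

Lemma An_zero u N : An u (fun _ => 0) N = 0.
Proof. by rewrite /An /Tsum big1 ?mulr0 // => i _; rewrite mul0r. Qed.

Lemma An_sum (I : Type) (r : seq I) u (F : I -> nat -> K) N :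
  An u (fun x => \sum_(i <- r) F i x) N = \sum_(i <- r) An u (F i) N.
Proof.
elim: r => [|i r ih].
  rewrite big_nil; transitivity (An u (fun _ => 0) N); last exact: An_zero.
  by apply: An_ext => x; rewrite big_nil.
rewrite big_cons -ih -An_add; apply: An_ext => x; by rewrite big_cons.
Qed.

Lemma Gen_fint u alpha h j :
  qGenocchi absv p alpha h u j.+1 / (j.+1)%:R =
  fermionic_int absv p u (fun xi => u ^+ ((h - 1) * xi) * qnum (u ^+ alpha) xi ^+ j).
Proof.
rewrite /qGenocchi; have c0 := @charK j.+1 (ltn0Sn j).
by rewrite mulrC mulrA mulVf // mul1r.
Qed.

Lemma phi_lim u alpha e j : adm u ->
  abs_cvg absv (An u (fun xi => u ^+ (e * xi) * qnum (u ^+ alpha) xi ^+ j))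
     (fermionic_int absv p u (fun xi => u ^+ (e * xi) * qnum (u ^+ alpha) xi ^+ j)).
Proof.
move=> hu.
have hg : Good (fun xi => u ^+ (e * xi) * qnum (u ^+ alpha) xi ^+ j).
  apply: (Good_ext _ (Good_mul (Good_pow _ (adm_X u e hu)) (Good_exp j (Good_qs _ (adm_X u alpha hu))))).
  by move=> x; rewrite exprM qnum_qs.
have [l hl] := An_cvg _ _ hu hg.
by rewrite (fint_eq _ _ _ hl).
Qed.


Lemma abs_coef n l : absv ((n%:R : K) * (-1) ^+ l) <= 1.
Proof. by rewrite absM abs_exp absN1 expr1n mulr1 abs_nat. Qed.

Lemma main_sec (q : K) (hq : adm q) (alpha h : nat) (hh : (0 < h)%N) (a S : nat) (haS : (a < S)%N) :
  let G := qGenocchi absv p alpha h q in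
  let Gi := qGenocchi absv p alpha h q^-1 in
  \sum_(0 <= l < (S - a).+1) ('C(S - a, l))%:R * (-1) ^+ l * (G (l + a).+1 / ((l + a).+1)%:R)
  = if a == 0%N then (1 + q) + q ^+ (h + 1) * (Gi S.+1 / (S.+1)%:R)
    else \sum_(0 <= l < a.+1) ('C(a, l))%:R * (-1) ^+ (a + l) *
          ((1 + q) + q ^+ (h + 1) * (Gi (S - l).+1 / ((S - l).+1)%:R)).
Proof.
move=> G Gi.
have hm1 : (0 < S - a)%N by rewrite subn_gt0.
have hw : adm (q ^+ (h - 1)) := adm_X q _ hq.
have ht : adm (q ^+ alpha) := adm_X q _ hq.
have hq' := adm_V hq.
pose phi j := fun xi => q ^+ ((h - 1) * xi) * qnum (q ^+ alpha) xi ^+ j.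
pose psi j := fun xi => q^-1 ^+ ((h - 1) * xi) * qnum (q^-1 ^+ alpha) xi ^+ j.
have eG j : G j.+1 / (j.+1)%:R = fermionic_int absv p q (phi j) := Gen_fint q alpha h j.
have eGi j : Gi j.+1 / (j.+1)%:R = fermionic_int absv p q^-1 (psi j) := Gen_fint q^-1 alpha h j.
have cphi j : abs_cvg absv (An q (phi j)) (fermionic_int absv p q (phi j)) := phi_lim q alpha (h - 1) j hq.
have cpsi j : abs_cvg absv (An q^-1 (psi j)) (fermionic_int absv p q^-1 (psi j)) := phi_lim q^-1 alpha (h - 1) j hq'.
set m := (S - a)%N in hm1 *.
set F := FF (q ^+ (h - 1)) (q ^+ alpha) a m.
set H := HH (q ^+ (h - 1)) (q ^+ alpha) a m.
set LF := \sum_(0 <= l < m.+1) ('C(m, l))%:R * (-1) ^+ l * fermionic_int absv p q (phi (l + a)%N).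
have eL : \sum_(0 <= l < m.+1) ('C(m, l))%:R * (-1) ^+ l * (G (l + a).+1 / ((l + a).+1)%:R) = LF.
  by apply: eq_bigr => l _; rewrite eG.
rewrite eL.
have P1 x : F x = \sum_(0 <= l < m.+1) ('C(m, l))%:R * (-1) ^+ l * phi (l + a)%N x.
  rewrite /F /FF /phi exprBn big_mkord mulr_sumr; apply: eq_bigr => i _.
  by rewrite expr1n mulr1 -mulr_natl exprM !qnum_qs exprD; ring.
have cF : abs_cvg absv (An q F) LF.
  have := @cvg_sum nat (index_iota 0 m.+1) xpredT
    (fun l N => ('C(m, l))%:R * (-1) ^+ l * An q (phi (l + a)%N) N)
    (fun l => ('C(m, l))%:R * (-1) ^+ l * fermionic_int absv p q (phi (l + a)%N))
    (fun l _ => cvg_scale (abs_coef _ _) (cphi (l + a)%N)).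
  move=> h1; apply: (cvg_ext h1) => N.
  by rewrite (An_ext _ _ _ N P1) An_sum; apply: eq_bigr => l _; rewrite An_scale.
have e1a (z : K) n : (1 - z) ^+ n = (-1) ^+ n * (z - 1) ^+ n by rewrite -exprMn mulN1r opprB.
have P3 x : a != 0%N -> H x = \sum_(0 <= i < a.+1) ('C(a, i))%:R * (-1) ^+ (a + i) * psi (S - i)%N x.
  move=> a0; rewrite /H /HH /psi e1a exprBn big_mkord !mulr_sumr; apply: eq_bigr => [[i hi]] _ /=.
  have ei : (S - i = m + (a - i))%N by rewrite /m; lia.
  rewrite ei !exprD expr1n mulr1 -mulr_natl !qnum_qs exprM -!exprVn; ring.
have P2 x : a = 0%N -> H x = psi S x.
  move=> a0; rewrite /H /HH /psi /m a0 subn0 expr0 mulr1 !qnum_qs exprM -!exprVn; ring.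
set LH := if a == 0%N then fermionic_int absv p q^-1 (psi S)
  else \sum_(0 <= i < a.+1) ('C(a, i))%:R * (-1) ^+ (a + i) * fermionic_int absv p q^-1 (psi (S - i)%N).
have cH : abs_cvg absv (An q^-1 H) LH.
  rewrite /LH; case: eqP => [a0|/eqP a0].
    by apply: (cvg_ext (cpsi S)) => N; apply: An_ext => x; rewrite P2.
  have := @cvg_sum nat (index_iota 0 a.+1) xpredT
    (fun i N => ('C(a, i))%:R * (-1) ^+ (a + i) * An q^-1 (psi (S - i)%N) N)
    (fun i => ('C(a, i))%:R * (-1) ^+ (a + i) * fermionic_int absv p q^-1 (psi (S - i)%N))
    (fun i _ => cvg_scale (abs_coef _ _) (cpsi (S - i)%N)).
  move=> h1; apply: (cvg_ext h1) => N.
  by rewrite (An_ext _ H _ N (fun x => P3 x a0)) An_sum; apply: eq_bigr => i _; rewrite An_scale.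
set c := q ^+ 2 * q ^+ (h - 1).
have habs : absv (- c) <= 1.
  by rewrite absN absM !abs_exp (adm_abs hq) !expr1n mulr1.
have c1 : abs_cvg absv (fun N => An q F N - c * An q^-1 H N) (LF + - c * LH).
  apply: (cvg_ext (cvg_add cF (cvg_scale habs cH))) => N; ring.
have c2 : abs_cvg absv (fun N => An q F N - c * An q^-1 H N) ((1 + q) * F 0%N).
  apply: (cvg_near _ (cvg_const _)) => N.
  have := core q (q ^+ (h - 1)) (q ^+ alpha) a m hq hw ht hm1 N.
  rewrite -/F -/H -absN; congr (_ <= _); congr absv; rewrite /c; ring.
have eq := cvg_uniq c1 c2.
have F0 : F 0%N = (a == 0%N)%:R by rewrite /F /FF qs0 subr0 expr1n expr0 mul1r mulr1 expr0n.
have eh : q ^+ (h + 1) = c by rewrite /c -exprD; congr (_ ^+ _); lia.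
have eLF : LF = (1 + q) * F 0%N + c * LH by rewrite -eq; ring.
rewrite eLF F0 eh /LH; case: eqP => [a0|/eqP a0].
  by rewrite eGi mulr1.
rewrite mulr0 add0r.
have C0 : \sum_(0 <= i < a.+1) ('C(a, i))%:R * (-1) ^+ (a + i) = 0 :> K.
  have := exprBn (1 : K) 1 a; rewrite subrr expr0n (negbTE a0) => e.
  have -> : \sum_(0 <= i < a.+1) ('C(a, i))%:R * (-1) ^+ (a + i) =
     (-1) ^+ a * \sum_(i < a.+1) (-1) ^+ i * 1 ^+ (a - i) * 1 ^+ i *+ 'C(a, i) :> K.
    rewrite big_mkord mulr_sumr; apply: eq_bigr => i _.
    by rewrite !expr1n !mulr1 -mulr_natl exprD; ring.
  by rewrite -e mulr0.
have -> : \sum_(0 <= l < a.+1) ('C(a, l))%:R * (-1) ^+ (a + l) * (1 + q + c * (Gi (S - l).+1 / (S - l).+1%:R)) =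
   (1 + q) * \sum_(0 <= l < a.+1) ('C(a, l))%:R * (-1) ^+ (a + l) +
   c * \sum_(0 <= i < a.+1) ('C(a, i))%:R * (-1) ^+ (a + i) * fermionic_int absv p q^-1 (psi (S - i)%N).
  rewrite !mulr_sumr -big_split; apply: eq_bigr => i _ /=; rewrite eGi; ring.
by rewrite C0 mulr0 add0r.
Qed.


End Padic.

Theorem mainTheorem8
  (R : realType) (K : closedFieldType) (absv : K -> R)
  (p : nat) (Hp : prime p) (Hodd : odd p) (HK : is_Cp_abs absv p)
  (q : K) (Hq : absv (q - 1) < 1)
  (alpha h : nat) (Hh : (0 < h)%N)
  (s : nat) (Hs : (2 <= s)%N) (n : 'I_s -> nat) (k : nat)
  (Hnk : (s * k < \sum_(d < s) n d)%N) :
  let S := (\sum_(d < s) n d)%N in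
  let G := qGenocchi absv p alpha h q in
  let Gi := qGenocchi absv p alpha h q^-1 in
  \sum_(0 <= l < (S - s * k).+1)
     ('C(S - s * k, l))%:R * (-1) ^+ l * (G (l + s * k).+1 / ((l + s * k).+1)%:R)
  = if k == 0%N then
      (1 + q) + q ^+ (h + 1) * (Gi S.+1 / (S.+1)%:R)
    else
      \sum_(0 <= l < (s * k).+1)
        ('C(s * k, l))%:R * (-1) ^+ (s * k + l) *
        ((1 + q) + q ^+ (h + 1) * (Gi (S - l).+1 / ((S - l).+1)%:R)).
Proof.
move=> S G Gi.
case: HK => abs_ge0 [abs_eq0 [absM [absD [absp complete]]]].
set d := Num.max (absv (q - 1)) (absv (p%:R : K)).
have hpd : absv (p%:R : K) <= d by rewrite le_max lexx orbT.
have hd1 : d < 1 by rewrite gt_max Hq (absp_lt1 _ _ _ _ Hp absp).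
have hq : adm R K absv d q by rewrite /adm le_max lexx.
have := main_sec _ _ _ abs_ge0 abs_eq0 absM absD _ Hp Hodd absp _ hpd hd1 complete _ hq alpha h Hh (s * k) S Hnk.
have -> : (s * k == 0)%N = (k == 0)%N.
  by rewrite muln_eq0; have -> : (s == 0)%N = false by apply/eqP => s0; rewrite s0 in Hs.
intro HH0; exact HH0.
Qed.
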